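(* Let $X$ be a Banach space, $k\in\mathbb{N}$, and $(x_s)_{s\in[\mathbb{N}]^k}$ a bounded $k$-sequence in $X$. Let $M\subseteq\mathbb{N}$ be infinite such that $(x_s)_{s\in[M]^k}$ generates a $k$-spreading model $(e_n)_n$ which is Cesàro summable to zero, i.e. $\|\frac1n\sum_{i=1}^n e_i\|_*\to0$. Then for every infinite $L\subseteq M$, $(x_s)_{s\in[L]^k}$ is $k$-Cesàro summable to $0$.
   Context: $[M]^k$: $k$-subsets of $M\subseteq\mathbb{N}$ (increasing enumerations, $M(l)$ the $l$-th element); $M|n=\{M(1),\dots,M(n)\}$. Plegma family: $(s_j)_{j=1}^l$ in $[M]^k$ with $s_1(i)<\dots<s_l(i)$ ($i\le k$), $s_l(i)<s_1(i+1)$ ($i<k$). $(x_s)_{s\in[M]^k}$ generates the Hamel basis $(e_n)$ of a seminormed space $(E,\|\cdot\|_* )$ as a $k$-spreading model if for a null sequence $\delta_l>0$: $|\|\sum_{j=1}^m a_jx_{s_j}\|-\|\sum_{j=1}^m a_je_j\|_*|\le\delta_l$ for all $m\le l$, plegma $(s_j)_{j=1}^m$ in $[M]^k$ with $s_1(1)\ge M(l)$, $a_j\in[-1,1]$. $(x_s)_{s\in[L]^k}$ is $k$-Cesàro summable to $x_0\in X$ if $\binom{n}{k}^{-1}\sum_{s\in[L|n]^k}x_s\to x_0$ in norm as $n\to\infty$. *)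

(* Defs.v *)
From Stdlib Require Import Reals Lra Lia List.
Import ListNotations.
Open Scope R_scope.

Record BanachSpace := {
  bs_car :> Type;
  bs_zero : bs_car;
  bs_add : bs_car -> bs_car -> bs_car;
  bs_opp : bs_car -> bs_car;
  bs_scal : R -> bs_car -> bs_car;
  bs_norm : bs_car -> R;
  bs_addA : forall x y z, bs_add x (bs_add y z) = bs_add (bs_add x y) z;
  bs_addC : forall x y, bs_add x y = bs_add y x;
  bs_add0 : forall x, bs_add x bs_zero = x;
  bs_addN : forall x, bs_add x (bs_opp x) = bs_zero;
  bs_scalA : forall a b x, bs_scal a (bs_scal b x) = bs_scal (a * b) x;
  bs_scal1 : forall x, bs_scal 1 x = x;
  bs_scalDr : forall a x y, bs_scal a (bs_add x y) = bs_add (bs_scal a x) (bs_scal a y);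
  bs_scalDl : forall a b x, bs_scal (a + b) x = bs_add (bs_scal a x) (bs_scal b x);
  bs_norm_triangle : forall x y, bs_norm (bs_add x y) <= bs_norm x + bs_norm y;
  bs_norm_scal : forall a x, bs_norm (bs_scal a x) = Rabs a * bs_norm x;
  bs_norm_eq0 : forall x, bs_norm x = 0 -> x = bs_zero;
  bs_complete : forall u : nat -> bs_car,
    (forall eps, 0 < eps -> exists N, forall p q, (N <= p)%nat -> (N <= q)%nat ->
        bs_norm (bs_add (u p) (bs_opp (u q))) < eps) ->
    exists l, forall eps, 0 < eps -> exists N, forall n, (N <= n)%nat ->
        bs_norm (bs_add (u n) (bs_opp l)) < eps
}.

Definition vsum (X : BanachSpace) (l : list X) : X :=
  fold_right (bs_add X) (bs_zero X) l.

(** Infinite subsets of N are represented by their strictly increasing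
    enumeration M : nat -> nat, with M(l) (1-based, as in the paper) = M (l-1). *)
Definition strictly_increasing (M : nat -> nat) : Prop :=
  forall i j, (i < j)%nat -> (M i < M j)%nat.

Definition in_kset (k : nat) (P : nat -> Prop) (s : list nat) : Prop :=
  length s = k /\
  (forall i, (S i < k)%nat -> (nth i s 0 < nth (S i) s 0)%nat) /\
  (forall x, In x s -> P x).

Definition in_range (M : nat -> nat) (x : nat) : Prop := exists i, M i = x.

(** (ss 0, ..., ss (m-1)) is a plegma family in [M]^k
    (s_j(i) of the paper is nth (i-1) (ss (j-1)) 0). *)
Definition plegma (k : nat) (M : nat -> nat) (ss : nat -> list nat) (m : nat) : Prop :=
  (forall j, (j < m)%nat -> in_kset k (in_range M) (ss j)) /\
  (forall i j j', (i < k)%nat -> (j < j')%nat -> (j' < m)%nat ->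
      (nth i (ss j) 0 < nth i (ss j') 0)%nat) /\
  (forall i, (S i < k)%nat -> (0 < m)%nat ->
      (nth i (ss (m - 1)%nat) 0 < nth (S i) (ss 0%nat) 0)%nat).

(** A seminorm on c00 = span of the Hamel basis (e_n).  Elements of the space
    are finitely supported sequences a : nat -> R, representing
    sum_n a n e_(n+1); ns is the seminorm ||.||_* . *)
Definition fin_supp (a : nat -> R) : Prop := exists N, forall n, (N <= n)%nat -> a n = 0.

Definition c00_seminorm (ns : (nat -> R) -> R) : Prop :=
  (forall a b, fin_supp a -> fin_supp b -> ns (fun n => a n + b n) <= ns a + ns b) /\
  (forall c a, fin_supp a -> ns (fun n => c * a n) = Rabs c * ns a).

(** sum_{j=1}^m a_j e_j, as an element of c00 (0-based coefficient a j for e_(j+1)). *)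
Definition trunc (m : nat) (a : nat -> R) : nat -> R :=
  fun n => if Nat.ltb n m then a n else 0.

Definition generates_spreading_model (X : BanachSpace) (k : nat)
  (x : list nat -> X) (M : nat -> nat) (ns : (nat -> R) -> R) : Prop :=
  exists delta : nat -> R, (forall l, 0 < delta l) /\ Un_cv delta 0 /\
  forall (l m : nat) (ss : nat -> list nat) (a : nat -> R),
    (1 <= l)%nat -> (m <= l)%nat -> plegma k M ss m ->
    (0 < m)%nat -> (M (l - 1)%nat <= nth 0 (ss 0%nat) 0)%nat ->
    (forall j, (j < m)%nat -> -1 <= a j <= 1) ->
    Rabs (bs_norm X (vsum X (map (fun j => bs_scal X (a j) (x (ss j))) (seq 0 m)))
          - ns (trunc m a)) <= delta l.

Definition cesaro_zero (ns : (nat -> R) -> R) : Prop :=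
  Un_cv (fun n => ns (trunc n (fun _ => / INR n))) 0.

Fixpoint choose (l : list nat) (k : nat) : list (list nat) :=
  match l, k with
  | _, O => [[]]
  | [], S _ => []
  | y :: t, S k' => map (cons y) (choose t k') ++ choose t (S k')
  end.

Definition k_cesaro_summable (X : BanachSpace) (k : nat) (x : list nat -> X)
  (L : nat -> nat) (x0 : X) : Prop :=
  forall eps, 0 < eps -> exists N, forall n, (N <= n)%nat ->
    bs_norm X (bs_add X
      (bs_scal X (/ Binomial.C n k) (vsum X (map x (choose (map L (seq 0 n)) k))))
      (bs_opp X x0)) < eps.

(* Main.v *)
Require Import Defs.
From Stdlib Require Import Reals Lra Lia List Arith.
Import ListNotations.
Open Scope R_scope.
Open Scope R_scope.

Lemma v_add0l (X : BanachSpace) (x : X) : bs_add X (bs_zero X) x = x.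
Proof. rewrite bs_addC. apply bs_add0. Qed.

Lemma v_scal0 (X : BanachSpace) (x : X) : bs_scal X 0 x = bs_zero X.
Proof.
  set (s := bs_scal X 0 x).
  assert (H : bs_add X s s = s) by (unfold s; rewrite <- bs_scalDl; f_equal; ring).
  assert (H2 : bs_add X (bs_add X s s) (bs_opp X s) = bs_add X s (bs_opp X s)) by (rewrite H; reflexivity).
  rewrite <- bs_addA, bs_addN, bs_add0 in H2. exact H2.
Qed.

Lemma v_scal_zero (X : BanachSpace) (a : R) : bs_scal X a (bs_zero X) = bs_zero X.
Proof.
  rewrite <- (v_scal0 X (bs_zero X)), bs_scalA. rewrite Rmult_0_r. reflexivity.
Qed.

Lemma v_norm_zero (X : BanachSpace) : bs_norm X (bs_zero X) = 0.
Proof. rewrite <- (v_scal0 X (bs_zero X)), bs_norm_scal, Rabs_R0. ring. Qed.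

Lemma v_opp_zero (X : BanachSpace) : bs_opp X (bs_zero X) = bs_zero X.
Proof.
  rewrite <- (bs_addN X (bs_zero X)) at 2. rewrite v_add0l. reflexivity.
Qed.

Lemma vsum_app (X : BanachSpace) (l1 l2 : list X) :
  vsum X (l1 ++ l2) = bs_add X (vsum X l1) (vsum X l2).
Proof.
  induction l1 as [|a l1 IH]; simpl.
  - rewrite v_add0l. reflexivity.
  - unfold vsum in *. simpl. rewrite IH, bs_addA. reflexivity.
Qed.

Lemma vsum_cons (X : BanachSpace) (a : X) l : vsum X (a :: l) = bs_add X a (vsum X l).
Proof. reflexivity. Qed.

Lemma vsum_norm_le (X : BanachSpace) (l : list X) (b : R) :
  (forall v, In v l -> bs_norm X v <= b) -> bs_norm X (vsum X l) <= INR (length l) * b.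
Proof.
  induction l as [|a l IH]; intro H; cbn [length].
  - unfold vsum; simpl. rewrite v_norm_zero. lra.
  - rewrite vsum_cons. eapply Rle_trans. apply bs_norm_triangle.
    assert (H1 := H a (or_introl eq_refl)).
    assert (H2 : bs_norm X (vsum X l) <= INR (length l) * b) by (apply IH; intros; apply H; right; auto).
    destruct (length l); simpl in *; lra.
Qed.

Lemma vsum_filter (X : BanachSpace) {A} (f : A -> X) (p : A -> bool) (P : list A) :
  vsum X (map f P) = bs_add X (vsum X (map f (filter p P)))
                       (vsum X (map f (filter (fun z => negb (p z)) P))).
Proof.
  induction P as [|a P IH]; cbn [map filter].
  - unfold vsum; simpl. rewrite bs_add0. reflexivity.
  - destruct (p a); cbn [negb map]; rewrite !vsum_cons, IH.
    + apply bs_addA.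
    + rewrite !bs_addA. f_equal. apply bs_addC.
Qed.

Lemma vsum_add_map (X : BanachSpace) {A} (f g : A -> X) (l : list A) :
  vsum X (map (fun t => bs_add X (f t) (g t)) l) =
  bs_add X (vsum X (map f l)) (vsum X (map g l)).
Proof.
  induction l as [|a l IH]; cbn [map length].
  - unfold vsum; simpl. rewrite bs_add0. reflexivity.
  - rewrite !vsum_cons, IH.
    rewrite !bs_addA. f_equal. rewrite <- !bs_addA. f_equal. apply bs_addC.
Qed.

Lemma vsum_const (X : BanachSpace) {A} (v : X) (l : list A) :
  vsum X (map (fun _ => v) l) = bs_scal X (INR (length l)) v.
Proof.
  induction l as [|a l IH]; cbn [map length].
  - rewrite v_scal0. reflexivity.
  - rewrite vsum_cons, IH. rewrite <- (bs_scal1 X v) at 1. rewrite <- bs_scalDl.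
    f_equal. destruct (length l); simpl; ring.
Qed.

Lemma vsum_scal (X : BanachSpace) (a : R) (l : list X) :
  bs_scal X a (vsum X l) = vsum X (map (bs_scal X a) l).
Proof.
  induction l as [|b l IH]; cbn [map].
  - apply v_scal_zero.
  - rewrite !vsum_cons, bs_scalDr, IH. reflexivity.
Qed.

Lemma vsum_exchange (X : BanachSpace) {A B} (f : A -> B -> X) (P : list A) (T : list B) :
  vsum X (map (fun s => vsum X (map (fun t => f s t) T)) P) =
  vsum X (map (fun t => vsum X (map (fun s => f s t) P)) T).
Proof.
  induction P as [|a P IH]; cbn [map filter].
  - rewrite vsum_const, v_scal_zero. reflexivity.
  - rewrite vsum_cons, IH, <- vsum_add_map. reflexivity.
Qed.
Open Scope R_scope.

Fixpoint binom (n k : nat) : nat :=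
  match n, k with
  | _, O => 1%nat
  | O, S _ => 0%nat
  | S n', S k' => (binom n' k' + binom n' (S k'))%nat
  end.

Lemma binom_S n k : binom (S n) (S k) = (binom n k + binom n (S k))%nat.
Proof. reflexivity. Qed.
Lemma binom_0 n : binom n 0 = 1%nat.
Proof. destruct n; reflexivity. Qed.

Lemma binom_gt n : forall k, (n < k)%nat -> binom n k = 0%nat.
Proof.
  induction n; intros k Hk; destruct k; try lia; try reflexivity.
  rewrite binom_S, !IHn; lia.
Qed.

Lemma binom_nn n : binom n n = 1%nat.
Proof. induction n; [reflexivity|]. rewrite binom_S, IHn, binom_gt; lia. Qed.

Lemma binom_mono n k : (binom n k <= binom (S n) k)%nat.
Proof. destruct k. rewrite !binom_0; lia. rewrite binom_S. lia. Qed.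

Lemma binom_mono_le n n' k : (n <= n')%nat -> (binom n k <= binom n' k)%nat.
Proof.
  induction 1. lia. eapply Nat.le_trans. exact IHle. apply binom_mono.
Qed.

Lemma binom_pos n k : (k <= n)%nat -> (0 < binom n k)%nat.
Proof.
  revert k; induction n; intros k Hk; destruct k; try lia.
  - cbn; lia.
  - rewrite binom_0; lia.
  - rewrite binom_S. specialize (IHn k). lia.
Qed.

Lemma binom_diag n : forall k, (binom n (S k) * S k = binom n k * (n - k))%nat.
Proof.
  induction n; intro k.
  - cbn. destruct k; cbn; lia.
  - rewrite binom_S. destruct k.
    + rewrite !binom_0. specialize (IHn 0%nat). rewrite binom_0 in IHn. lia.
    + rewrite binom_S. 
      assert (H1 := IHn (S k)). assert (H2 := IHn k).
      destruct (Nat.le_gt_cases (S k) n).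
      * replace (S n - S k)%nat with (S (n - S k)) by lia.
        replace (n - k)%nat with (S (n - S k)) in H2 by lia. nia.
      * rewrite (binom_gt n (S (S k))) by lia. rewrite (binom_gt n (S k)) in * by lia.
        replace (S n - S k)%nat with 0%nat by lia. nia.
Qed.

Lemma binom_diff r p k : (binom (r + p) (S k) - binom p (S k) <= r * binom (r + p) k)%nat.
Proof.
  induction r. cbn. lia.
  replace (S r + p)%nat with (S (r + p)) by lia. rewrite binom_S.
  assert (binom p (S k) <= binom (r + p) (S k))%nat by (apply binom_mono_le; lia).
  assert (binom (r+p) k <= binom (S (r + p)) k)%nat by apply binom_mono. nia.
Qed.

Lemma C_n_0' n : Binomial.C n 0 = 1.
Proof. unfold Binomial.C. rewrite Nat.sub_0_r. cbn [fact]. assert (H := INR_fact_neq_0 n). simpl INR. field. auto. Qed.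
Lemma C_n_n' n : Binomial.C n n = 1.
Proof. unfold Binomial.C. rewrite Nat.sub_diag. cbn [fact]. assert (H := INR_fact_neq_0 n). simpl INR. field. auto. Qed.

Lemma binom_C n : forall k, (k <= n)%nat -> INR (binom n k) = Binomial.C n k.
Proof.
  induction n; intros k Hk.
  - destruct k; [|lia]. rewrite C_n_0'. reflexivity.
  - destruct k. rewrite binom_0, C_n_0'. reflexivity.
    rewrite binom_S. destruct (Nat.eq_dec k n).
    + subst. rewrite binom_nn, (binom_gt n (S n)) by lia. rewrite C_n_n'. simpl. ring.
    + rewrite plus_INR, IHn, IHn by lia. apply Binomial.pascal. lia.
Qed.

Lemma choose_nil_S k : choose [] (S k) = [].
Proof. reflexivity. Qed.
Lemma choose_0 l : choose l 0 = [[]].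
Proof. destruct l; reflexivity. Qed.
Lemma choose_cons_S y t k : choose (y :: t) (S k) = map (cons y) (choose t k) ++ choose t (S k).
Proof. reflexivity. Qed.

Lemma length_choose l : forall k, length (choose l k) = binom (length l) k.
Proof.
  induction l as [|y t IH]; intro k; destruct k; try reflexivity.
  rewrite choose_cons_S, length_app, length_map, !IH. reflexivity.
Qed.

Lemma choose_map (f : nat -> nat) l : forall k, choose (map f l) k = map (map f) (choose l k).
Proof.
  induction l as [|y t IH]; intro k; destruct k; try reflexivity.
  cbn [map]. rewrite !choose_cons_S, map_app, !IH, !map_map. reflexivity.
Qed.

Lemma filter_choose (q : nat -> bool) l : forall k,
  filter (fun s => forallb q s) (choose l k) = choose (filter q l) k.
Proof.
  induction l as [|y t IH]; intro k; destruct k; try reflexivity.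
  - rewrite !choose_0. reflexivity.
  - rewrite choose_cons_S, filter_app, IH. cbn [filter].
    destruct (q y) eqn:E.
    + rewrite choose_cons_S. f_equal. rewrite <- IH.
      clear IH. induction (choose t k) as [|z zs IHz]; cbn. reflexivity.
      rewrite E. cbn. destruct (forallb q z); cbn; rewrite IHz; reflexivity.
    + replace (filter (fun s => forallb q s) (map (cons y) (choose t k))) with (@nil (list nat)).
      reflexivity.
      clear IH. induction (choose t k) as [|z zs IHz]; cbn. reflexivity.
      rewrite E. cbn. exact IHz.
Qed.
Open Scope nat_scope.

Definition incr (s : list nat) : Prop :=
  forall i, (S i < length s)%nat -> (nth i s 0 < nth (S i) s 0)%nat.

Lemma incr_cons a s : incr s -> (forall u, In u s -> (a < u)%nat) -> incr (a :: s).
Proof.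
  intros Hs Ha i Hi. destruct i.
  - cbn [nth]. destruct s as [|u s']. cbn in Hi; lia. apply Ha. left. reflexivity.
  - cbn [nth]. apply Hs. cbn [length] in Hi. lia.
Qed.

Lemma choose_seq_prop n : forall a k s, In s (choose (seq a n) k) ->
  length s = k /\ incr s /\ (forall u, In u s -> (a <= u < a + n)%nat).
Proof.
  induction n; intros a k s Hs.
  - cbn [seq] in Hs. destruct k.
    + cbn in Hs. destruct Hs as [<-|[]]. split; [reflexivity|]. split.
      intros i Hi; cbn in Hi; lia. intros u [].
    + destruct Hs.
  - cbn [seq] in Hs. destruct k.
    + rewrite choose_0 in Hs. destruct Hs as [<-|[]]. split; [reflexivity|]. split.
      intros i Hi; cbn in Hi; lia. intros u [].
    + rewrite choose_cons_S in Hs. apply in_app_or in Hs. destruct Hs as [Hs|Hs].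
      * apply in_map_iff in Hs. destruct Hs as [s' [<- Hs']].
        destruct (IHn _ _ _ Hs') as [H1 [H2 H3]].
        split. cbn; lia. split.
        apply incr_cons; auto. intros u Hu; specialize (H3 u Hu); lia.
        intros u [<-|Hu]. lia. specialize (H3 u Hu); lia.
      * destruct (IHn _ _ _ Hs) as [H1 [H2 H3]]. split; auto. split; auto.
        intros u Hu; specialize (H3 u Hu); lia.
Qed.

Fixpoint gapb (m : nat) (s : list nat) : bool :=
  match s with
  | a :: t => match t with
              | b :: _ => andb (Nat.leb (a + m) b) (gapb m t)
              | [] => true
              end
  | [] => true
  end.

Lemma gapb_spec m s : gapb m s = true ->
  forall i, (S i < length s)%nat -> (nth i s 0 + m <= nth (S i) s 0)%nat.
Proof.
  induction s as [|a t IH]; intros H i Hi. cbn in Hi; lia.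
  destruct t as [|b t']. cbn in Hi; lia.
  cbn [gapb] in H. apply andb_prop in H. destruct H as [H1 H2].
  destruct i.
  - cbn [nth]. apply Nat.leb_le. exact H1.
  - change (nth (S i) (a :: b :: t') 0) with (nth i (b :: t') 0).
    change (nth (S (S i)) (a :: b :: t') 0) with (nth (S i) (b :: t') 0).
    apply IH. exact H2. cbn [length] in *. lia.
Qed.

Definition hdlt (c : nat) (s : list nat) : bool :=
  match s with u :: _ => Nat.ltb u c | [] => false end.

Lemma filter_map_gen {A B} (p : B -> bool) (f : A -> B) (l : list A) :
  filter p (map f l) = map f (filter (fun z => p (f z)) l).
Proof. induction l; cbn; [reflexivity|]. destruct (p (f a)); cbn; rewrite IHl; reflexivity. Qed.

Lemma length_filter_le {A} (p q : A -> bool) (l : list A) :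
  (forall z, p z = true -> q z = true) -> (length (filter p l) <= length (filter q l))%nat.
Proof.
  intro H. induction l; cbn. lia.
  destruct (p a) eqn:E. rewrite (H a E). cbn. lia. destruct (q a); cbn; lia.
Qed.

Lemma length_filter_or {A} (p q : A -> bool) (l : list A) :
  (length (filter (fun z => orb (p z) (q z)) l) <= length (filter p l) + length (filter q l))%nat.
Proof.
  induction l; cbn. lia. destruct (p a), (q a); cbn; lia.
Qed.

Lemma length_filter_false {A} (l : list A) : length (filter (fun _ => false) l) = 0%nat.
Proof. induction l; cbn; auto. Qed.

Lemma count_hd n : forall b c k,
  (length (filter (hdlt c) (choose (seq b n) (S k))) <= (c - b) * binom n k)%nat.
Proof.
  induction n; intros b c k. apply Nat.le_0_l.
  cbn [seq]. rewrite choose_cons_S, filter_app, length_app, filter_map_gen.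
  cbn [hdlt]. specialize (IHn (S b) c k).
  assert (binom n k <= binom (S n) k)%nat by apply binom_mono.
  destruct (Nat.ltb b c) eqn:E.
  - apply Nat.ltb_lt in E. rewrite length_map.
    assert (length (filter (fun _ => true) (choose (seq (S b) n) k)) = length (choose (seq (S b) n) k)).
    { clear. induction (choose (seq (S b) n) k); cbn; auto. }
    rewrite H0, length_choose, length_seq. nia.
  - apply Nat.ltb_ge in E. rewrite length_map, length_filter_false.
    replace (c - S b)%nat with 0%nat in IHn by lia. lia.
Qed.

Lemma count_gap (m : nat) n : forall b k,
  (length (filter (fun s => negb (gapb m s)) (choose (seq b n) (S k))) <= k * m * binom n k)%nat.
Proof.
  induction n; intros b k. apply Nat.le_0_l.
  cbn [seq]. rewrite choose_cons_S, filter_app, length_app, filter_map_gen, length_map.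
  destruct k.
  - rewrite choose_0. cbn. specialize (IHn (S b) 0%nat). lia.
  - assert (H1 : (length (filter (fun z => negb (gapb m (b :: z))) (choose (seq (S b) n) (S k)))
                 <= length (filter (fun z => orb (hdlt (b + m) z) (negb (gapb m z))) (choose (seq (S b) n) (S k))))%nat).
    { apply length_filter_le. intros z Hz. destruct z as [|c z']. cbn in Hz. discriminate.
      change (gapb m (b :: c :: z')) with (andb (Nat.leb (b + m) c) (gapb m (c :: z'))) in Hz.
      change (hdlt (b + m) (c :: z')) with (Nat.ltb c (b + m)).
      destruct (Nat.leb (b + m) c) eqn:E1.
      - cbn [andb] in Hz. rewrite Hz. apply Bool.orb_true_r.
      - apply Nat.leb_gt in E1. apply Nat.ltb_lt in E1. rewrite E1. reflexivity. }
    assert (H2 := length_filter_or (hdlt (b + m)) (fun z => negb (gapb m z)) (choose (seq (S b) n) (S k))).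
    assert (H3 := count_hd n (S b) (b + m) k).
    assert (H4 := IHn (S b) k). assert (H5 := IHn (S b) (S k)).
    rewrite binom_S. nia.
Qed.
Open Scope R_scope.

Lemma seq_shift_add t W : forall c, map (fun u => (u + t)%nat) (seq c W) = seq (c + t) W.
Proof. induction W; intro c; cbn; [reflexivity|]. rewrite IHW. f_equal. Qed.

Lemma filter_all_true {A} (p : A -> bool) l : (forall z, In z l -> p z = true) -> filter p l = l.
Proof. induction l; intro H; cbn; auto. rewrite H by (left; auto). rewrite IHl; auto. intros; apply H; right; auto. Qed.
Lemma filter_all_false {A} (p : A -> bool) l : (forall z, In z l -> p z = false) -> filter p l = [].
Proof. induction l; intro H; cbn; auto. rewrite H by (left; auto). apply IHl. intros; apply H; right; auto. Qed.

Lemma filter_seq_window lo W n : (lo + W <= n)%nat ->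
  filter (fun u => andb (Nat.leb lo u) (Nat.ltb u (lo + W))) (seq 0 n) = seq lo W.
Proof.
  intro H. replace n with (lo + (W + (n - lo - W)))%nat by lia.
  rewrite !seq_app, !filter_app. cbn [Nat.add].
  rewrite (filter_all_false _ (seq 0 lo)), (filter_all_true _ (seq lo W)), (filter_all_false _ (seq (lo + W) _)).
  - rewrite app_nil_r. reflexivity.
  - intros z Hz. apply in_seq in Hz. destruct (Nat.ltb z (lo + W)) eqn:E. apply Nat.ltb_lt in E. lia.
    apply Bool.andb_false_r.
  - intros z Hz. apply in_seq in Hz. apply andb_true_intro; split. apply Nat.leb_le; lia. apply Nat.ltb_lt; lia.
  - intros z Hz. apply in_seq in Hz. destruct (Nat.leb lo z) eqn:E. apply Nat.leb_le in E. lia. reflexivity.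
Qed.

Lemma sinc_mono (f : nat -> nat) : strictly_increasing f -> forall i j, (i <= j)%nat -> (f i <= f j)%nat.
Proof. intros Hf i j Hij. destruct (Nat.eq_dec i j). subst; lia. apply Nat.lt_le_incl, Hf. lia. Qed.

Lemma L_ge_M (M L : nat -> nat) : strictly_increasing M -> strictly_increasing L ->
  (forall i, in_range M (L i)) -> forall i, (M i <= L i)%nat.
Proof.
  intros HM HL Hr.
  assert (forall i, exists p, (i <= p)%nat /\ M p = L i).
  { induction i. destruct (Hr 0%nat) as [p Hp]. exists p. split; auto. lia.
    destruct IHi as [p [Hp1 Hp2]]. destruct (Hr (S i)) as [q Hq]. exists q. split; auto.
    destruct (Nat.le_gt_cases q p) as [Hqp|Hqp]; [|lia].
    assert (M q <= M p)%nat by (apply sinc_mono; auto).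
    assert (L i < L (S i))%nat by (apply HL; lia). lia. }
  intro i. destruct (H i) as [p [Hp1 Hp2]]. rewrite <- Hp2. apply sinc_mono; auto.
Qed.

Lemma nth_map_lt {A B} (f : A -> B) (l : list A) i (d : A) (e : B) :
  (i < length l)%nat -> nth i (map f l) e = f (nth i l d).
Proof.
  intro H. rewrite (nth_indep (map f l) e (f d)) by (rewrite length_map; auto). apply map_nth.
Qed.

Lemma in_kset_map (k : nat) (L : nat -> nat) (P : nat -> Prop) s :
  strictly_increasing L -> length s = k -> incr s -> (forall u, In u s -> P (L u)) ->
  in_kset k P (map L s).
Proof.
  intros HL Hl Hs HP. split; [rewrite length_map; auto|]. split.
  - intros i Hi. rewrite !(nth_map_lt L s _ 0%nat) by lia. apply HL, Hs. lia.
  - intros v Hv. apply in_map_iff in Hv. destruct Hv as [u [<- Hu]]. auto.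
Qed.

Lemma incr_of_gap m s : (1 <= m)%nat -> gapb m s = true -> incr s.
Proof. intros Hm Hg i Hi. assert (H := gapb_spec m s Hg i Hi). lia. Qed.

Lemma good_family (X : BanachSpace) (k : nat) (x : list nat -> X) (M L : nat -> nat)
  (ns : (nat -> R) -> R) (delta : nat -> R) (l m : nat) (s : list nat) :
  strictly_increasing M -> strictly_increasing L -> (forall i, in_range M (L i)) ->
  (forall (l m : nat) (ss : nat -> list nat) (a : nat -> R),
    (1 <= l)%nat -> (m <= l)%nat -> plegma k M ss m ->
    (0 < m)%nat -> (M (l - 1)%nat <= nth 0 (ss 0%nat) 0)%nat ->
    (forall j, (j < m)%nat -> -1 <= a j <= 1) ->
    Rabs (bs_norm X (vsum X (map (fun j => bs_scal X (a j) (x (ss j))) (seq 0 m)))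
          - ns (trunc m a)) <= delta l) ->
  (1 <= m)%nat -> (m <= l)%nat -> length s = k -> (1 <= k)%nat -> gapb m s = true ->
  (forall u, In u s -> (l - 1 <= u)%nat) ->
  bs_norm X (vsum X (map (fun t => x (map L (map (fun u => (u + t)%nat) s))) (seq 0 m)))
   <= INR m * (ns (trunc m (fun _ => / INR m)) + delta l).
Proof.
  intros HM HL Hr Hsp Hm Hml Hlen Hk Hg Hc.
  assert (Hinc := incr_of_gap m s Hm Hg).
  set (ss := fun j => map L (map (fun u => (u + j)%nat) s)).
  assert (Hnth : forall i j, (i < k)%nat -> nth i (ss j) 0%nat = L (nth i s 0%nat + j)%nat).
  { intros i j Hi. unfold ss. rewrite map_map. rewrite (nth_map_lt _ s _ 0%nat) by lia. reflexivity. }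
  assert (Hpl : plegma k M ss m).
  { split; [|split].
    - intros j Hj. unfold ss. apply in_kset_map.
      + exact HL.
      + rewrite length_map; auto.
      + intros i Hi. rewrite length_map in Hi. rewrite !(nth_map_lt _ s _ 0%nat) by lia.
        specialize (Hinc i Hi). lia.
      + intros u Hu. apply Hr.
    - intros i j j' Hi Hjj Hj'. rewrite !Hnth by auto. apply HL. lia.
    - intros i Hi Hm0. rewrite !Hnth by lia. apply HL.
      assert (H := gapb_spec m s Hg i ltac:(lia)). lia. }
  assert (HmR : 1 <= INR m) by (apply (le_INR 1); auto).
  assert (Hs0 : (0 < length s)%nat) by lia.
  specialize (Hsp l m ss (fun _ => / INR m) ltac:(lia) Hml Hpl ltac:(lia)).
  assert (Hfirst : (M (l - 1) <= nth 0 (ss 0%nat) 0)%nat).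
  { rewrite Hnth by lia. rewrite Nat.add_0_r.
    assert (H0 : (l - 1 <= nth 0 s 0)%nat) by (apply Hc; apply nth_In; lia).
    assert (M (l-1) <= M (nth 0 s 0%nat))%nat by (apply sinc_mono; auto).
    assert (M (nth 0 s 0%nat) <= L (nth 0 s 0%nat))%nat by (apply L_ge_M; auto). lia. }
  specialize (Hsp Hfirst).
  assert (Ha : forall j, (j < m)%nat -> -1 <= / INR m <= 1).
  { intros j _. split. assert (0 < / INR m) by (apply Rinv_0_lt_compat; lra). lra.
    rewrite <- Rinv_1. apply Rinv_le_contravar; lra. }
  specialize (Hsp Ha).
  assert (Heq : vsum X (map (fun j => bs_scal X (/ INR m) (x (ss j))) (seq 0 m)) =
                bs_scal X (/ INR m) (vsum X (map (fun t => x (map L (map (fun u => (u + t)%nat) s))) (seq 0 m)))).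
  { rewrite vsum_scal, map_map. reflexivity. }
  cbv beta in Hsp. rewrite Heq, bs_norm_scal in Hsp.
  rewrite (Rabs_right (/ INR m)) in Hsp by (apply Rle_ge, Rlt_le, Rinv_0_lt_compat; lra).
  set (N := bs_norm X _) in *.
  assert (HN : / INR m * N <= ns (trunc m (fun _ => / INR m)) + delta l)
    by (pose proof (Rle_abs (/ INR m * N - ns (trunc m (fun _ => / INR m)))); lra).
  apply (Rmult_le_compat_l (INR m)) in HN; [|lra].
  rewrite <- Rmult_assoc, Rinv_r, Rmult_1_l in HN by lra. exact HN.
Qed.
Open Scope R_scope.

Lemma length_filter_split {A} (p : A -> bool) (l : list A) :
  (length (filter p l) + length (filter (fun z => negb (p z)) l) = length l)%nat.
Proof. induction l; cbn; auto. destruct (p a); cbn; lia. Qed.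

Lemma incr_shift s t : incr s -> incr (map (fun u => (u + t)%nat) s).
Proof.
  intros H i Hi. rewrite length_map in Hi. rewrite !(nth_map_lt _ s _ 0%nat) by lia.
  specialize (H i Hi). lia.
Qed.

Theorem mainTheorem14 (X : BanachSpace) (k : nat) (x : list nat -> X)
  (M : nat -> nat) (ns : (nat -> R) -> R) :
  (1 <= k)%nat ->
  (exists B, forall s, in_kset k (fun _ => True) s -> bs_norm X (x s) <= B) ->
  strictly_increasing M ->
  c00_seminorm ns ->
  generates_spreading_model X k x M ns ->
  cesaro_zero ns ->
  forall L : nat -> nat, strictly_increasing L -> (forall i, in_range M (L i)) ->
    k_cesaro_summable X k x L (bs_zero X).
Proof.
  intros Hk [B HB] HM Hns [delta [Hdpos [Hdcv Hsp]]] Hces L HL Hr eps Heps.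
  destruct k as [|k']; [lia|]. clear Hk.
  set (B' := Rmax B 0).
  assert (HB'0 : 0 <= B') by apply Rmax_r.
  assert (HBnd : forall s, incr s -> length s = S k' -> bs_norm X (x (map L s)) <= B').
  { intros s Hs Hl. eapply Rle_trans; [|apply Rmax_l]. apply HB. apply in_kset_map; auto. }
  destruct (Hces (eps / 4) ltac:(lra)) as [N1 HN1].
  set (m := S N1).
  assert (Hm1 : (1 <= m)%nat) by (unfold m; lia).
  assert (Hnsm : ns (trunc m (fun _ => / INR m)) < eps / 4).
  { specialize (HN1 m ltac:(unfold m; lia)). unfold R_dist in HN1. rewrite Rminus_0_r in HN1.
    pose proof (Rle_abs (ns (trunc m (fun _ => / INR m)))). lra. }
  destruct (Hdcv (eps / 4) ltac:(lra)) as [N2 HN2].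
  set (l := (N2 + m)%nat).
  assert (Hdl : delta l < eps / 4).
  { specialize (HN2 l ltac:(unfold l; lia)). unfold R_dist in HN2. rewrite Rminus_0_r in HN2.
    pose proof (Rle_abs (delta l)). lra. }
  set (c := (l - 1)%nat).
  set (K := (k' * m + m + c)%nat).
  destruct (INR_unbounded (4 * INR K * B' * INR (S k') / eps)) as [N3 HN3].
  exists (N3 + k' + m + c + 1)%nat. intros n Hn.
  rewrite v_opp_zero, bs_add0, choose_map, map_map.
  set (Cn := choose (seq 0 n) (S k')).
  set (S0 := vsum X (map (fun s => x (map L s)) Cn)).
  set (W := (n - m - c)%nat).
  set (D := choose (seq c W) (S k')).
  set (q := fun t u => andb (Nat.leb (c + t) u) (Nat.ltb u (c + t + W))).
  set (E := fun t => vsum X (map (fun s => x (map L s)) (filter (fun z => negb (forallb (q t) z)) Cn))).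
  set (f := fun s t => x (map L (map (fun u => (u + t)%nat) s))).
  assert (Hdec : forall t, (t < m)%nat -> S0 = bs_add X (vsum X (map (fun s => f s t) D)) (E t)).
  { intros t Ht. unfold S0, E. rewrite (vsum_filter X _ (forallb (q t))). f_equal.
    unfold Cn. rewrite filter_choose. unfold q. rewrite filter_seq_window by (unfold W; lia).
    rewrite <- seq_shift_add, choose_map, map_map. reflexivity. }
  assert (HCn : forall s, In s Cn -> incr s /\ length s = S k').
  { intros s Hs. destruct (choose_seq_prop _ _ _ _ Hs) as [H1 [H2 _]]. auto. }
  assert (HD : forall s, In s D -> incr s /\ length s = S k' /\ (forall u, In u s -> (c <= u)%nat)).
  { intros s Hs. destruct (choose_seq_prop _ _ _ _ Hs) as [H1 [H2 H3]]. split; auto. split; auto.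
    intros u Hu; specialize (H3 u Hu); lia. }
  assert (HE : forall t, (t < m)%nat -> bs_norm X (E t) <= INR ((m + c) * binom n k') * B').
  { intros t Ht. unfold E. eapply Rle_trans. apply vsum_norm_le with (b := B').
    - intros v Hv. apply in_map_iff in Hv. destruct Hv as [s [<- Hs]].
      apply filter_In in Hs. destruct Hs as [Hs _]. destruct (HCn s Hs). apply HBnd; auto.
    - apply Rmult_le_compat_r; auto. apply le_INR. rewrite length_map.
      assert (H1 := length_filter_split (forallb (q t)) Cn).
      unfold Cn in H1 at 1. rewrite filter_choose in H1. unfold q in H1.
      rewrite filter_seq_window in H1 by (unfold W; lia).
      unfold Cn in H1. rewrite !length_choose, !length_seq in H1.
      assert (H2 := binom_diff (m + c) W k'). replace (m + c + W)%nat with n in H2 by (unfold W; lia).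
      unfold Cn, q. cbv beta. lia. }
  assert (Hsum : bs_scal X (INR m) S0 =
     bs_add X (bs_add X (vsum X (map (fun s => vsum X (map (fun t => f s t) (seq 0 m))) (filter (gapb m) D)))
                        (vsum X (map (fun s => vsum X (map (fun t => f s t) (seq 0 m))) (filter (fun z => negb (gapb m z)) D))))
              (vsum X (map E (seq 0 m)))).
  { replace (INR m) with (INR (length (seq 0 m))) by (rewrite length_seq; reflexivity). rewrite <- (vsum_const X S0 (seq 0 m)).
    rewrite (map_ext_in (fun _ => S0) (fun t => bs_add X (vsum X (map (fun s => f s t) D)) (E t))).
    2:{ intros t Ht. apply in_seq in Ht. apply Hdec. lia. }
    rewrite vsum_add_map. f_equal. rewrite <- vsum_exchange. apply vsum_filter. }
  assert (Hgood : bs_norm X (vsum X (map (fun s => vsum X (map (fun t => f s t) (seq 0 m))) (filter (gapb m) D)))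
                  <= INR (binom n (S k')) * (INR m * (eps / 2))).
  { eapply Rle_trans. apply vsum_norm_le with (b := INR m * (eps / 2)).
    - intros v Hv. apply in_map_iff in Hv. destruct Hv as [s [<- Hs]].
      apply filter_In in Hs. destruct Hs as [Hs Hg]. destruct (HD s Hs) as [H1 [H2 H3]].
      eapply Rle_trans; [unfold f;
      apply (good_family X (S k') x M L ns delta l m s); auto; try (unfold l; lia);
      try (intros u Hu; specialize (H3 u Hu); unfold c in H3; lia) |].
      apply Rmult_le_compat_l. apply pos_INR. lra.
    - apply Rmult_le_compat_r. assert (0 <= INR m) by apply pos_INR. nra.
      apply le_INR. rewrite length_map.
      eapply Nat.le_trans. apply (length_filter_le _ (fun _ => true)). auto.
      assert (length (filter (fun _ : list nat => true) D) = length D) by (clear; induction D; cbn; auto).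
      rewrite H. unfold D. rewrite length_choose, length_seq. apply binom_mono_le. unfold W; lia. }
  assert (Hbad : bs_norm X (vsum X (map (fun s => vsum X (map (fun t => f s t) (seq 0 m))) (filter (fun z => negb (gapb m z)) D)))
                  <= INR (k' * m * binom n k') * (INR m * B')).
  { eapply Rle_trans. apply vsum_norm_le with (b := INR m * B').
    - intros v Hv. apply in_map_iff in Hv. destruct Hv as [s [<- Hs]].
      apply filter_In in Hs. destruct Hs as [Hs Hg]. destruct (HD s Hs) as [H1 [H2 H3]].
      eapply Rle_trans. apply vsum_norm_le with (b := B').
      + intros v Hv. apply in_map_iff in Hv. destruct Hv as [t [<- _]]. unfold f.
        apply HBnd. apply incr_shift; auto. rewrite length_map; auto.
      + rewrite length_map, length_seq. lra.
    - apply Rmult_le_compat_r. assert (0 <= INR m) by apply pos_INR. nra.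
      apply le_INR. rewrite length_map. unfold D.
      eapply Nat.le_trans. apply count_gap.
      apply Nat.mul_le_mono_l. apply binom_mono_le. unfold W; lia. }
  assert (HEsum : bs_norm X (vsum X (map E (seq 0 m))) <= INR m * (INR ((m + c) * binom n k') * B')).
  { eapply Rle_trans. apply vsum_norm_le with (b := INR ((m + c) * binom n k') * B').
    - intros v Hv. apply in_map_iff in Hv. destruct Hv as [t [<- Ht]]. apply in_seq in Ht. apply HE. lia.
    - rewrite length_map, length_seq. lra. }
  assert (HmR : 1 <= INR m) by (apply (le_INR 1); auto).
  assert (HS : INR m * bs_norm X S0 <=
          INR (binom n (S k')) * (INR m * (eps / 2)) + INR (k' * m * binom n k') * (INR m * B')
          + INR m * (INR ((m + c) * binom n k') * B')).
  { replace (INR m * bs_norm X S0) with (bs_norm X (bs_scal X (INR m) S0))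
      by (rewrite bs_norm_scal, Rabs_right; lra). rewrite Hsum.
    eapply Rle_trans. apply bs_norm_triangle. apply Rplus_le_compat; [|exact HEsum].
    eapply Rle_trans. apply bs_norm_triangle. apply Rplus_le_compat; [exact Hgood|exact Hbad]. }
  set (P := INR (binom n (S k'))) in *. set (Q := INR (binom n k')) in *.
  assert (HS2 : bs_norm X S0 <= P * (eps / 2) + INR K * Q * B').
  { unfold K. rewrite !mult_INR, !plus_INR, !mult_INR in *. fold Q in HS.
    apply (Rmult_le_reg_l (INR m)). lra. nra. }
  assert (HkN : (S k' <= n)%nat) by lia.
  assert (HP : 0 < P) by (apply (lt_INR 0); apply binom_pos; auto).
  assert (Hdiag := binom_diag n k').
  apply (f_equal INR) in Hdiag. rewrite !mult_INR in Hdiag. fold P Q in Hdiag.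
  rewrite <- (binom_C n (S k') HkN). fold P.
  rewrite bs_norm_scal, Rabs_right by (apply Rle_ge, Rlt_le, Rinv_0_lt_compat; auto).
  assert (Hnk : INR (n - k') > INR N3) by (apply lt_INR; lia).
  assert (HK0 : 0 <= INR K) by apply pos_INR.
  assert (Hk0 : 0 < INR (S k')) by (apply (lt_INR 0); lia).
  assert (Hq0 : 0 <= Q) by apply pos_INR.
  assert (HN30 : 4 * INR K * B' * INR (S k') < eps * INR (n - k')).
  { assert (H := HN3). unfold Rdiv in H.
    apply (Rmult_lt_compat_r eps) in H; [|lra]. rewrite Rmult_assoc, Rinv_l, Rmult_1_r in H by lra.
    nra. }
  assert (HKQ : INR K * Q * B' < P * (eps / 2)).
  { assert (Hpos : 0 < INR (n - k')) by (apply (lt_INR 0); lia).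
    apply (Rmult_lt_reg_r (INR (n - k'))); auto.
    replace (INR K * Q * B' * INR (n - k')) with (INR K * B' * (Q * INR (n - k'))) by ring.
    rewrite <- Hdiag. assert (H1 := Rmult_lt_compat_l P _ _ HP HN30). assert (0 <= P * eps * INR (n - k')) by (apply Rmult_le_pos; [apply Rmult_le_pos|]; lra). nra. }
  apply (Rmult_lt_reg_l P); auto. rewrite <- Rmult_assoc, Rinv_r, Rmult_1_l by lra. lra.
Qed.
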